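(* Let $P$ be a generic regular hexagon in $\mathbb{R}^3$. For every support system $u_1,\ldots,u_6$ of $P$, the derived hexagon $P'$, with edge vectors $v'_1=u_2-u_1,\ v'_2=u_3-u_2,\ldots,\ v'_5=u_6-u_5,\ v'_6=u_1-u_6$ and determinants $\Delta'_i=(v'_i,[v'_{i+1},v'_{i+2}])$, satisfies $\Delta'_1=\Delta'_4$, $\Delta'_2=\Delta'_5$, $\Delta'_3=\Delta'_6$; hence every generic derivative of $P$ is strongly-regular. Moreover, all (generic) derivatives of $P$, over all support systems of $P$, have the same type.
   Context: Indices are cyclic mod $6$; $(\cdot,\cdot)$ and $[\cdot,\cdot]$ are the dot and cross products. For a closed hexagon $A_1\ldots A_6$ put $v_1=\overline{A_1A_2},\ldots,v_6=\overline{A_6A_1}$ and $\Delta_i=(v_i,[v_{i+1},v_{i+2}])$. The hexagon is generic if any two consecutive $v_i,v_{i+1}$ are not collinear and any three consecutive $v_i,v_{i+1},v_{i+2}$ are not coplanar. A support system is a tuple $u_1,\ldots,u_6$ with $[u_i,u_{i+1}]=v_{i+1}$ for all $i$; a generic hexagon is regular if it has a support system. The derived hexagon (derivative) for a support system is $B_1\ldots B_6$ with $\overline{OB_i}=u_i$ for a fixed origin $O$. A regular hexagon is strongly-regular if $\Delta_1=\Delta_4$, $\Delta_2=\Delta_5$, $\Delta_3=\Delta_6$; its type is the cyclic ratio $\Delta_1:\Delta_2:\Delta_3$, i.e. the triple $(\Delta_1,\Delta_2,\Delta_3)$ up to multiplication by a nonzero scalar and cyclic permutation. *)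

(* Defs.v *)
From HB Require Import structures.
From mathcomp Require Import all_boot all_order all_algebra.
From mathcomp Require Import reals.
Set Implicit Arguments. Unset Strict Implicit. Unset Printing Implicit Defensive.
Import Order.TTheory GRing.Theory Num.Theory.
Local Open Scope ring_scope.

Section Hex.
Variable R : realType.
Notation vec := 'rV[R]_3.

Definition i3 (k : nat) : 'I_3 := inord (k %% 3).
Definition sh (i : 'I_6) (k : nat) : 'I_6 := inord ((i + k) %% 6).

Definition dot (u w : vec) : R := \sum_(k < 3) u 0 k * w 0 k.
Definition cross (u w : vec) : vec :=
  \row_(k < 3) (u 0 (i3 (k + 1)) * w 0 (i3 (k + 2))
              - u 0 (i3 (k + 2)) * w 0 (i3 (k + 1))).

Definition collinear (u w : vec) : bool := (\rank (col_mx u w) < 2)%N.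
Definition coplanar (u v w : vec) : bool := (\rank (col_mx u (col_mx v w)) < 3)%N.

(* a closed hexagon A_0 ... A_5 (paper's A_1 ... A_6), given by its vertices *)
Definition hexagon := 'I_6 -> vec.

Definition edge (A : hexagon) (i : 'I_6) : vec := A (sh i 1) - A i.

Definition Delta (A : hexagon) (i : 'I_6) : R :=
  dot (edge A i) (cross (edge A (sh i 1)) (edge A (sh i 2))).

Definition generic (A : hexagon) : Prop :=
  forall i : 'I_6, ~~ collinear (edge A i) (edge A (sh i 1)) /\
    ~~ coplanar (edge A i) (edge A (sh i 1)) (edge A (sh i 2)).

Definition support_system (A : hexagon) (u : 'I_6 -> vec) : Prop :=
  forall i : 'I_6, cross (u i) (u (sh i 1)) = edge A (sh i 1).

Definition regular (A : hexagon) : Prop :=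
  generic A /\ exists u, support_system A u.

(* derived hexagon B_i with O B_i = u_i (origin O = 0) *)
Definition derived (u : 'I_6 -> vec) : hexagon := u.

Definition strongly_regular (A : hexagon) : Prop :=
  regular A /\ forall i : 'I_6, Delta A i = Delta A (sh i 3).

Definition Dtriple (A : hexagon) : R * R * R :=
  (Delta A (sh ord0 0), Delta A (sh ord0 1), Delta A (sh ord0 2)).

Definition rot3 (t : R * R * R) : R * R * R :=
  let: (a, b, c) := t in (b, c, a).

Definition same_ratio (t t' : R * R * R) : Prop :=
  exists (k : R) (n : nat), k != 0 /\ (n < 3)%N /\
    let: (a, b, c) := iter n rot3 t in t' = (k * a, k * b, k * c).

Definition same_type (A B : hexagon) : Prop := same_ratio (Dtriple A) (Dtriple B).

End Hex.

(* Main.v *)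
Require Import Defs.
From HB Require Import structures.
From mathcomp Require Import all_boot all_order all_algebra.
From mathcomp Require Import reals.
From mathcomp Require Import ring lra.
Set Implicit Arguments. Unset Strict Implicit. Unset Printing Implicit Defensive.
Import Order.TTheory GRing.Theory Num.Theory.
Local Open Scope ring_scope.


Section Aux.
Variable R : realType.
Notation vec := 'rV[R]_3.

Lemma i3E (k : nat) : (k < 3)%N -> val (i3 k) = k.
Proof. by move=> h; rewrite /i3 /= inordK ?modn_small // ltn_pmod. Qed.

Lemma i3_eq (a b : nat) : (a %% 3 = b %% 3)%N -> i3 a = i3 b.
Proof. by move=> h; rewrite /i3 h. Qed.

Lemma dotE (p q : vec) : dot p q =
  p 0 (i3 0) * q 0 (i3 0) + p 0 (i3 1) * q 0 (i3 1) + p 0 (i3 2) * q 0 (i3 2).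
Proof.
rewrite /dot !big_ord_recr big_ord0 /= add0r.
by congr (_ + _ + _); congr (p 0 _ * q 0 _); apply/val_inj; rewrite /= i3E.
Qed.

Lemma crossE0 (p q : vec) : cross p q 0 (i3 0) = p 0 (i3 1) * q 0 (i3 2) - p 0 (i3 2) * q 0 (i3 1).
Proof. by rewrite /cross mxE (@i3_eq (i3 0 + 1) 1) ?i3E // (@i3_eq (i3 0 + 2) 2) ?i3E. Qed.
Lemma crossE1 (p q : vec) : cross p q 0 (i3 1) = p 0 (i3 2) * q 0 (i3 0) - p 0 (i3 0) * q 0 (i3 2).
Proof. by rewrite /cross mxE (@i3_eq (i3 1 + 1) 2) ?i3E // (@i3_eq (i3 1 + 2) 0) ?i3E. Qed.
Lemma crossE2 (p q : vec) : cross p q 0 (i3 2) = p 0 (i3 0) * q 0 (i3 1) - p 0 (i3 1) * q 0 (i3 0).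
Proof. by rewrite /cross mxE (@i3_eq (i3 2 + 1) 0) ?i3E // (@i3_eq (i3 2 + 2) 1) ?i3E. Qed.

Lemma vec_eq (p q : vec) : p 0 (i3 0) = q 0 (i3 0) -> p 0 (i3 1) = q 0 (i3 1) ->
  p 0 (i3 2) = q 0 (i3 2) -> p = q.
Proof.
move=> h0 h1 h2; apply/rowP => j.
have -> : j = i3 j by apply/val_inj; rewrite i3E.
by case: j => [[|[|[|]]]] //.
Qed.

Definition tp (a b c : vec) := dot a (cross b c).
Lemma eD (p q : vec) j : (p + q) 0 j = p 0 j + q 0 j. Proof. by rewrite mxE. Qed.
Lemma eN (p : vec) j : (- p) 0 j = - p 0 j. Proof. by rewrite mxE. Qed.
Lemma eB (p q : vec) j : (p - q) 0 j = p 0 j - q 0 j. Proof. by rewrite !mxE. Qed.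
Lemma eZ (a : R) (p : vec) j : (a *: p) 0 j = a * p 0 j. Proof. by rewrite mxE. Qed.
Lemma e0 j : (0 : vec) 0 j = 0. Proof. by rewrite mxE. Qed.

End Aux.

Ltac coords := rewrite /tp ?dotE; do 6 rewrite ?crossE0 ?crossE1 ?crossE2 ?eB ?eD ?eN ?eZ ?e0.

Section P.
Variable R : realType.
Notation vec := 'rV[R]_3.
Definition clos (a0 a1 a2 a3 a4 a5 : vec) :=
  cross a0 a1 + cross a1 a2 + cross a2 a3 + cross a3 a4 + cross a4 a5 + cross a5 a0.
Definition D4 (a0 a1 a2 a3 : vec) := tp (a1 - a0) (a2 - a1) (a3 - a2).

Lemma P1 (a0 a1 a2 a3 a4 a5 : vec) :
  D4 a0 a1 a2 a3 - D4 a3 a4 a5 a0 = dot (a3 - a0) (clos a0 a1 a2 a3 a4 a5).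
Proof. rewrite /D4 /clos; coords; ring. Qed.

Lemma P3a (a0 a1 a2 a3 a4 a5 : vec) (s t : R) :
  D4 (t *: a1) (s *: a2) (t *: a3) (s *: a4) * D4 a0 a1 a2 a3
  - D4 (s *: a0) (t *: a1) (s *: a2) (t *: a3) * D4 a1 a2 a3 a4
  = s * t * (s - t) * dot (tp a1 a2 a3 *: (a4 - a0)) (clos a0 a1 a2 a3 a4 a5).
Proof. rewrite /D4 /clos; coords; ring. Qed.

Lemma P3b (a0 a1 a2 a3 a4 a5 : vec) (s t : R) :
  D4 (s *: a2) (t *: a3) (s *: a4) (t *: a5) * D4 a0 a1 a2 a3
  - D4 (s *: a0) (t *: a1) (s *: a2) (t *: a3) * D4 a2 a3 a4 a5
  = s * t * (s - t) * dot (tp a0 a2 a3 *: (a5 - a1) + tp a1 a2 a3 *: (a0 - a2)) (clos a0 a1 a2 a3 a4 a5).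
Proof. rewrite /D4 /clos; coords; ring. Qed.
End P.

Section M.
Variable R : realType.
Notation vec := 'rV[R]_3.

Lemma det3 (M : 'M[R]_3) : \det M =
  M (inord 0) (inord 0) * (M (inord 1) (inord 1) * M (inord 2) (inord 2) - M (inord 1) (inord 2) * M (inord 2) (inord 1))
  - M (inord 0) (inord 1) * (M (inord 1) (inord 0) * M (inord 2) (inord 2) - M (inord 1) (inord 2) * M (inord 2) (inord 0))
  + M (inord 0) (inord 2) * (M (inord 1) (inord 0) * M (inord 2) (inord 1) - M (inord 1) (inord 1) * M (inord 2) (inord 0)).
Proof.
rewrite (expand_det_row _ 0) !big_ord_recr big_ord0 /= /cofactor.
rewrite !(expand_det_row _ 0) !big_ord_recr !big_ord0 /= /cofactor !det_mx11 /=.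
rewrite !mxE /=.
set f := fun i j : nat => M (inord i) (inord j).
have E : forall i j, M i j = f i j by move=> i j; rewrite /f !inord_val.
rewrite !E /= !inordK // /f.
have b00 : (bump 0 0 = 1)%N by []. have b01 : (bump 0 1 = 2)%N by [].
have b10 : (bump 1 0 = 0)%N by []. have b11 : (bump 1 1 = 2)%N by [].
have b20 : (bump 2 0 = 0)%N by []. have b21 : (bump 2 1 = 1)%N by [].
rewrite !b00 !b01 !b10 !b11 !b20 !b21.
ring.
Qed.

Lemma cm (p q r : vec) j :
  [/\ col_mx p (col_mx q r) (inord 0 : 'I_3) j = p 0 j,
  col_mx p (col_mx q r) (inord 1 : 'I_3) j = q 0 j &
  col_mx p (col_mx q r) (inord 2 : 'I_3) j = r 0 j].
Proof.
split.
- have -> : (inord 0 : 'I_3) = (lshift (1+1) (ord0 : 'I_1) : 'I_(1+(1+1))) by apply/val_inj; rewrite /= inordK.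
  by rewrite col_mxEu.
- have -> : (inord 1 : 'I_3) = (rshift 1 (lshift 1 (ord0 : 'I_1)) : 'I_(1+(1+1))) by apply/val_inj; rewrite /= inordK.
  by rewrite col_mxEd col_mxEu.
- have -> : (inord 2 : 'I_3) = (rshift 1 (rshift 1 (ord0 : 'I_1)) : 'I_(1+(1+1))) by apply/val_inj; rewrite /= inordK.
  by rewrite col_mxEd col_mxEd.
Qed.

Lemma i3inord k : (k < 3)%N -> i3 k = inord k.
Proof. by move=> h; rewrite /i3 modn_small. Qed.

Lemma tp_det (p q r : vec) : tp p q r = \det (col_mx p (col_mx q r) : 'M_3).
Proof.
rewrite det3; coords.
rewrite !i3inord //.
have [a0 a1 a2] := cm p q r (inord 0).
have [b0 b1 b2] := cm p q r (inord 1).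
have [c0 c1 c2] := cm p q r (inord 2).
rewrite a0 a1 a2 b0 b1 b2 c0 c1 c2; ring.
Qed.

Lemma ncop (p q r : vec) : ~~ coplanar p q r -> tp p q r != 0.
Proof.
apply: contra => /eqP h.
rewrite /coplanar.
have hr : (\rank (col_mx p (col_mx q r)) <= 3)%N by apply: rank_leq_row.
rewrite ltn_neqAle hr andbT.
have := @row_free_unit _ 3 (col_mx p (col_mx q r)).
rewrite /row_free => ->.
by rewrite unitmxE unitfE -tp_det h eqxx.
Qed.
End M.

Section M2.
Variable R : realType.
Notation vec := 'rV[R]_3.
Implicit Types (A B : hexagon R) (u w : 'I_6 -> vec).

Lemma sh0 (i : 'I_6) : sh i 0 = i.
Proof. by apply/val_inj; rewrite /sh /= inordK addn0 ?modn_small. Qed.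

Lemma shK (i : 'I_6) a b c : ((a + b) %% 6 = c %% 6)%N -> sh (sh i a) b = sh i c.
Proof.
move=> h; apply/val_inj; rewrite /sh /= !inordK ?ltn_pmod //.
by rewrite modnDml -addnA -modnDmr h modnDmr.
Qed.

Lemma shm (i : 'I_6) a b : (a %% 6 = b %% 6)%N -> sh i a = sh i b.
Proof. by move=> h; rewrite /sh -modnDmr h modnDmr. Qed.

Lemma DeltaE B (i : 'I_6) : Delta B i =
  tp (B (sh i 1) - B (sh i 0)) (B (sh i 2) - B (sh i 1)) (B (sh i 3) - B (sh i 2)).
Proof. by rewrite /Delta /edge /tp (@shK i 1 1 2) // (@shK i 2 1 3) // sh0. Qed.

Lemma closure A u (i : 'I_6) : support_system A u ->
  clos (u (sh i 0)) (u (sh i 1)) (u (sh i 2)) (u (sh i 3)) (u (sh i 4)) (u (sh i 5)) = 0.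
Proof.
move=> hs.
have h k : cross (u (sh i k)) (u (sh i k.+1)) = A (sh i k.+2) - A (sh i k.+1).
  have := hs (sh i k); rewrite /edge !(@shK i k 1 k.+1) ?addn1 //.
  by rewrite (@shK i k.+1 1 k.+2) ?addn1.
have h5 := h 5%N.
rewrite (@shm i 6 0) // (@shm i 7 1) // in h5.
rewrite /clos h h h h h h5.
rewrite (@shm i 6 0) //.
apply: vec_eq; rewrite ?eB ?eD ?eN ?e0; ring.
Qed.

End M2.

Section M3.
Variable R : realType.
Notation vec := 'rV[R]_3.
Implicit Types (A B : hexagon R) (u w : 'I_6 -> vec).

Lemma dot0 (p : vec) : dot p 0 = 0.
Proof. rewrite dotE !e0; ring. Qed.
Lemma cross0l (q : vec) : cross 0 q = 0.
Proof. apply: vec_eq; coords; ring. Qed.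
Lemma cross0r (q : vec) : cross q 0 = 0.
Proof. apply: vec_eq; coords; ring. Qed.
Lemma crossZ (a b : R) (p q : vec) : cross (a *: p) (b *: q) = (a * b) *: cross p q.
Proof. apply: vec_eq; coords; ring. Qed.
Lemma crossnn (p : vec) : cross p p = 0.
Proof. apply: vec_eq; coords; ring. Qed.
Lemma crosscross (a b c : vec) : cross (cross a b) (cross b c) = tp a b c *: b.
Proof. apply: vec_eq; coords; ring. Qed.
Lemma dotcl (p q : vec) : dot p (cross p q) = 0.
Proof. coords; ring. Qed.
Lemma dotcr (p q : vec) : dot q (cross p q) = 0.
Proof. coords; ring. Qed.
Lemma tpC (a b c : vec) : tp a b c = dot (cross a b) c.
Proof. coords; ring. Qed.
Lemma tp0 (b c : vec) : tp 0 b c = 0.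
Proof. coords; ring. Qed.
Lemma lag (p q x : vec) : dot (cross p q) (cross p q) *: x =
  dot x (cross p q) *: cross p q - cross (cross p q) (dot x p *: q - dot x q *: p).
Proof. apply: vec_eq; coords; ring. Qed.
Lemma lag2 (x y : vec) : dot x x *: y = dot y x *: x + cross x (cross y x).
Proof. apply: vec_eq; coords; ring. Qed.

Lemma dotnn (p : vec) : p != 0 -> dot p p != 0.
Proof.
apply: contra_neq => h; rewrite dotE in h.
have s0 := sqr_ge0 (p 0 (i3 0)). have s1 := sqr_ge0 (p 0 (i3 1)). have s2 := sqr_ge0 (p 0 (i3 2)).
rewrite !expr2 in s0 s1 s2.
apply: vec_eq; rewrite e0; nra.
Qed.

Lemma par (p q x y : vec) : cross p q != 0 -> dot x p = 0 -> dot x q = 0 ->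
  dot y p = 0 -> dot y q = 0 -> x != 0 -> y = (dot y x / dot x x) *: x.
Proof.
move=> n0 hxp hxq hyp hyq x0.
have nn0 := dotnn n0.
have hx := lag p q x; rewrite hxp hxq !scale0r subrr cross0r subr0 in hx.
have hy := lag p q y; rewrite hyp hyq !scale0r subrr cross0r subr0 in hy.
have hyx : cross y x = 0.
  have : (dot (cross p q) (cross p q) * dot (cross p q) (cross p q)) *: cross y x = 0.
    by rewrite -crossZ hy hx crossZ crossnn scaler0.
  by move/eqP; rewrite scaler_eq0 mulf_eq0 orbb (negbTE nn0) /= => /eqP.
have := lag2 x y; rewrite hyx cross0r addr0 => hh.
rewrite mulrC -scalerA -hh scalerA mulVf ?scale1r //.
exact: dotnn.
Qed.
End M3.

Section M4.
Variable R : realType.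
Notation vec := 'rV[R]_3.
Implicit Types (A B : hexagon R) (u w : 'I_6 -> vec).

Lemma sh_in k m n : (k < 6)%N -> ((k + m) %% 6 = n)%N -> sh (inord k : 'I_6) m = inord n.
Proof. by move=> hk h; rewrite /sh inordK // h. Qed.

Lemma part1 A u : support_system A u -> forall i, Delta (derived u) i = Delta (derived u) (sh i 3).
Proof.
move=> hs i; rewrite /derived !DeltaE (@shK i 3 1 4) // (@shK i 3 0 3) // (@shK i 3 2 5) //.
rewrite (@shK i 3 3 0) //.
apply/eqP; rewrite -subr_eq0; apply/eqP.
have := P1 (u (sh i 0)) (u (sh i 1)) (u (sh i 2)) (u (sh i 3)) (u (sh i 4)) (u (sh i 5)).
by rewrite /D4 => ->; rewrite (closure i hs) dot0.
Qed.

Lemma reg_of B : generic B -> (forall i, Delta B i = Delta B (sh i 3)) ->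
  exists w, support_system B w.
Proof.
move=> hg hD.
have dnz i : Delta B i != 0 by have [_ h] := hg i; exact: (ncop h).
pose d k := Delta B (inord k).
pose lam (k : nat) : R := match k with 0 => 1 | 1 => (d 0%N)^-1 | 2 => d 0%N / d 1%N
  | 3 => d 1%N / (d 0%N * d 2%N) | 4 => d 2%N / d 1%N | _ => (d 2%N)^-1 end.
have d0 : d 0%N != 0 by apply: dnz. have d1 : d 1%N != 0 by apply: dnz.
have d2 : d 2%N != 0 by apply: dnz.
have e3 : Delta B (inord 3) = d 0%N by rewrite /d [RHS]hD (@sh_in 0 3 3).
have e4 : Delta B (inord 4) = d 1%N by rewrite /d [RHS]hD (@sh_in 1 3 4).
have e5 : Delta B (inord 5) = d 2%N by rewrite /d [RHS]hD (@sh_in 2 3 5).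
exists (fun j => lam (val j) *: cross (edge B j) (edge B (sh j 1))).
move=> j /=.
rewrite crossZ (@shK j 1 1 2) // crosscross.
change (tp (edge B j) (edge B (sh j 1)) (edge B (sh j 2))) with (Delta B j).
rewrite scalerA.
suff -> : lam j * lam (sh j 1) * Delta B j = 1 by rewrite scale1r.
rewrite -(inord_val j); case: j => [[|[|[|[|[|[|//]]]]]] hj] /=.
- rewrite (@sh_in 0 1 1) // !inordK // -/(d 0%N) /lam; field; do ?[apply/andP; split] => //.
- rewrite (@sh_in 1 1 2) // !inordK // -/(d 1%N) /lam; field; do ?[apply/andP; split] => //.
- rewrite (@sh_in 2 1 3) // !inordK // -/(d 2%N) /lam; field; do ?[apply/andP; split] => //.
- rewrite (@sh_in 3 1 4) // !inordK // e3  /lam; field; do ?[apply/andP; split] => //.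
- rewrite (@sh_in 4 1 5) // !inordK // e4  /lam; field; do ?[apply/andP; split] => //.
- rewrite (@sh_in 5 1 0) // !inordK // e5  /lam; field; do ?[apply/andP; split] => //.
Qed.

End M4.

Section M5.
Variable R : realType.
Notation vec := 'rV[R]_3.
Implicit Types (A B : hexagon R) (u w : 'I_6 -> vec).

Lemma dot0l (p : vec) : dot 0 p = 0.
Proof. rewrite dotE !e0; ring. Qed.

Lemma alt (x y z : R) : x * y = 1 -> y * z = 1 -> z = x.
Proof. by move=> h1 h2; rewrite -[z]mul1r -h1 -mulrA h2 mulr1. Qed.

Lemma part3 A u w : generic A -> support_system A u -> support_system A w ->
  generic (derived u) -> generic (derived w) -> same_type (derived u) (derived w).
Proof.
move=> hgA hu hw hgu hgw.
have dA j : tp (edge A j) (edge A (sh j 1)) (edge A (sh j 2)) != 0 := ncop (hgA j).2.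
have ev j : edge A j != 0.
  by apply/eqP => h; move: (dA j); rewrite h tp0 eqxx.
have nA j : cross (edge A j) (edge A (sh j 1)) != 0.
  by apply/eqP => h; move: (dA j); rewrite tpC h dot0l eqxx.
have orth u' (hs : support_system A u') j :
    dot (u' j) (edge A j) = 0 /\ dot (u' j) (edge A (sh j 1)) = 0.
  split; last by rewrite -hs dotcl.
  by have := hs (sh j 5); rewrite (@shK j 5 1 0) // sh0 => <-; rewrite dotcr.
have unz u' (hs : support_system A u') j : u' j != 0.
  by apply/eqP => h; move: (ev (sh j 1)); rewrite -hs h cross0l eqxx.
pose mu j := dot (w j) (u j) / dot (u j) (u j).
have hwu j : w j = mu j *: u j.
  exact: (par (nA j) (orth u hu j).1 (orth u hu j).2 (orth w hw j).1 (orth w hw j).2 (unz u hu j)).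
have hmu j : mu j * mu (sh j 1) = 1.
  have := hw j; rewrite (hwu j) (hwu (sh j 1)) crossZ hu => /eqP.
  rewrite -subr_eq0 -{2}(scale1r (edge A (sh j 1))) -scalerBl scaler_eq0 (negbTE (ev _)) orbF.
  by rewrite subr_eq0 => /eqP.
have hm k : mu (sh ord0 k) * mu (sh ord0 k.+1) = 1.
  by have := hmu (sh ord0 k); rewrite (@shK ord0 k 1 k.+1) ?addn1.
set s := mu (sh ord0 0); set t := mu (sh ord0 1).
have m2 : mu (sh ord0 2) = s by apply: (alt (hm 0%N) (hm 1%N)).
have m3 : mu (sh ord0 3) = t by apply: (alt (hm 1%N) (hm 2%N)).
have m4 : mu (sh ord0 4) = s by rewrite -m2; apply: (alt (hm 2%N) (hm 3%N)).
have m5 : mu (sh ord0 5) = t by rewrite -m3; apply: (alt (hm 3%N) (hm 4%N)).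
set a0 := u (sh ord0 0); set a1 := u (sh ord0 1); set a2 := u (sh ord0 2).
set a3 := u (sh ord0 3); set a4 := u (sh ord0 4); set a5 := u (sh ord0 5).
have hC : clos a0 a1 a2 a3 a4 a5 = 0 := closure ord0 hu.
rewrite /same_type /Dtriple /derived.
have F0 : Delta u (sh ord0 0) = D4 a0 a1 a2 a3.
  by rewrite DeltaE (@shK ord0 0 0 0) // (@shK ord0 0 1 1) // (@shK ord0 0 2 2) // (@shK ord0 0 3 3).
have F1 : Delta u (sh ord0 1) = D4 a1 a2 a3 a4.
  by rewrite DeltaE (@shK ord0 1 0 1) // (@shK ord0 1 1 2) // (@shK ord0 1 2 3) // (@shK ord0 1 3 4).
have F2 : Delta u (sh ord0 2) = D4 a2 a3 a4 a5.
  by rewrite DeltaE (@shK ord0 2 0 2) // (@shK ord0 2 1 3) // (@shK ord0 2 2 4) // (@shK ord0 2 3 5).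
have G0 : Delta w (sh ord0 0) = D4 (s *: a0) (t *: a1) (s *: a2) (t *: a3).
  rewrite DeltaE (@shK ord0 0 0 0) // (@shK ord0 0 1 1) // (@shK ord0 0 2 2) // (@shK ord0 0 3 3) //.
  by rewrite !hwu m2 m3.
have G1 : Delta w (sh ord0 1) = D4 (t *: a1) (s *: a2) (t *: a3) (s *: a4).
  rewrite DeltaE (@shK ord0 1 0 1) // (@shK ord0 1 1 2) // (@shK ord0 1 2 3) // (@shK ord0 1 3 4) //.
  by rewrite !hwu m2 m3 m4.
have G2 : Delta w (sh ord0 2) = D4 (s *: a2) (t *: a3) (s *: a4) (t *: a5).
  rewrite DeltaE (@shK ord0 2 0 2) // (@shK ord0 2 1 3) // (@shK ord0 2 2 4) // (@shK ord0 2 3 5) //.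
  by rewrite !hwu m2 m3 m4 m5.
have du0 : Delta u (sh ord0 0) != 0 := ncop (hgu _).2.
have dw0 : Delta w (sh ord0 0) != 0 := ncop (hgw _).2.
have h1 := P3a a0 a1 a2 a3 a4 a5 s t.
have h2 := P3b a0 a1 a2 a3 a4 a5 s t.
rewrite hC dot0 mulr0 -F0 -F1 -G0 -G1 in h1.
rewrite hC dot0 mulr0 -F0 -F2 -G0 -G2 in h2.
exists (Delta w (sh ord0 0) / Delta u (sh ord0 0)), 0%N; split.
  by rewrite mulf_neq0 ?invr_eq0.
split => //=.
move: h1 h2 du0 dw0.
set x0 := Delta u _; set x1 := Delta u _; set x2 := Delta u _.
set y0 := Delta w _; set y1 := Delta w _; set y2 := Delta w _.
move=> h1 h2 hx0 hy0.
congr (_, _, _).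
- by field.
- apply: (mulIf hx0); rewrite mulrAC divfK //.
  by apply/eqP; rewrite -subr_eq0 h1.
- apply: (mulIf hx0); rewrite mulrAC divfK //.
  by apply/eqP; rewrite -subr_eq0 h2.
Qed.
End M5.


Unset Implicit Arguments.

Theorem theorem5p1 (R : realType) (A : hexagon R) :
  regular A ->
  (forall u : 'I_6 -> 'rV[R]_3, support_system A u ->
     forall i : 'I_6, Delta (derived u) i = Delta (derived u) (sh i 3)) /\
  (forall u : 'I_6 -> 'rV[R]_3, support_system A u ->
     generic (derived u) -> strongly_regular (derived u)) /\
  (forall u w : 'I_6 -> 'rV[R]_3, support_system A u -> support_system A w ->
     generic (derived u) -> generic (derived w) ->
     same_type (derived u) (derived w)).
Proof.
move=> [hgA _].
split; first by move=> u hu i; exact: part1 hu i.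
split.
  move=> u hu hg; split; last exact: part1 hu.
  by split => //; apply: reg_of hg (part1 hu).
by move=> u w hu hw; exact: part3 hgA hu hw.
Qed.
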